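(* Let $n\ge5$. There is no isomorphism preserving the structure of $\mathbb{Z}_2^n$-graded algebra between $\mathbb{O}_{n,0}$ or $\mathbb{O}_{0,n}$ and any $\mathbb{O}_{p,q}$ with $p+q=n$, $p,q\ge1$. Moreover, in the same sense of non-isomorphism: if $n=4k$, the algebras $\mathbb{O}_{n-1,1}$, $\mathbb{O}_{n-2,2}$, $\mathbb{O}_{n-4,4}$ are pairwise non-isomorphic; if $n=4k+1$, $\mathbb{O}_{n-1,1}\not\simeq\mathbb{O}_{n-2,2}$; if $n=4k+2$, the algebras $\mathbb{O}_{n-1,1}$, $\mathbb{O}_{n-2,2}$, $\mathbb{O}_{n-3,3}$ are pairwise non-isomorphic; if $n=4k+3$, $\mathbb{O}_{n-1,1}\not\simeq\mathbb{O}_{n-3,3}$.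
   Context: $\mathbb{Z}_2=\{0,1\}$. For $p+q=n\ge3$, $\mathbb{O}_{p,q}$ is the real algebra with basis $\{u_x: x\in\mathbb{Z}_2^n\}$ and product $u_x\cdot u_y=(-1)^{f(x,y)}u_{x+y}$, where $f(x,y)=\sum_{1\le i<j<k\le n}(x_ix_jy_k+x_iy_jx_k+y_ix_jx_k)+\sum_{1\le i\le j\le n}x_iy_j+\sum_{1\le i\le p}x_iy_i$. An isomorphism preserving the graded structure is an algebra isomorphism sending each homogeneous element (scalar multiple of some $u_x$) to a homogeneous element. *)

(* Defs.v *)
From HB Require Import structures.
From mathcomp Require Import all_boot all_order all_algebra.
From mathcomp Require Import reals.
Set Implicit Arguments. Unset Strict Implicit. Unset Printing Implicit Defensive.
Import Order.TTheory GRing.Theory Num.Theory.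
Local Open Scope ring_scope.

(* Z_2^n, coordinates indexed 0..n-1 (paper's index i corresponds to i-1) *)
Notation Z2n n := {ffun 'I_n -> bool}.

Definition addZ2n n (x y : Z2n n) : Z2n n := [ffun i => x i (+) y i].

(* the exponent f(x,y) for O_{p,q} with p + q = n (q = n - p) *)
Definition fexp (n p : nat) (x y : Z2n n) : nat :=
  (\sum_(i < n) \sum_(j < n) \sum_(k < n)
     ((i < j) && (j < k))%N *
       (x i * x j * y k + x i * y j * x k + y i * x j * x k))%N
  + (\sum_(i < n) \sum_(j < n) ((i <= j)%N * x i * y j))%N
  + (\sum_(i < n | (i < p)%N) (x i * y i))%N.

(* underlying real vector space of O_{p,q}: functions Z_2^n -> R,
   coordinates w.r.t. the basis (u_x) *)
Notation Oalg R n := {ffun Z2n n -> R}.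

Definition ubasis (R : realType) n (x : Z2n n) : Oalg R n :=
  [ffun y => (y == x)%:R].

(* bilinear extension of u_x . u_y = (-1)^f(x,y) u_{x+y}, for O_{p, n-p} *)
Definition Omul (R : realType) (n p : nat) (a b : Oalg R n) : Oalg R n :=
  [ffun z => \sum_(x : Z2n n) \sum_(y : Z2n n)
     (if addZ2n x y == z then (-1) ^+ fexp p x y * a x * b y else 0)].

Definition oscale (R : realType) n (c : R) (a : Oalg R n) : Oalg R n :=
  [ffun y => c * a y].

Definition homogeneous (R : realType) n (a : Oalg R n) : Prop :=
  exists (c : R) (x : Z2n n), a = oscale c (ubasis R x).

Definition graded_iso (R : realType) (n p p' : nat) (phi : Oalg R n -> Oalg R n) : Prop :=
  [/\ (forall a b, phi (a + b) = phi a + phi b),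
      (forall (c : R) a, phi (oscale c a) = oscale c (phi a)),
      bijective phi,
      (forall a b, phi (Omul p a b) = Omul p' (phi a) (phi b))
    & (forall a, homogeneous a -> homogeneous (phi a))].

Definition graded_isomorphic (R : realType) (n p p' : nat) : Prop :=
  exists phi : Oalg R n -> Oalg R n, graded_iso p p' phi.

(* Main.v *)
Require Import Defs.
From HB Require Import structures.
From mathcomp Require Import all_boot all_order all_algebra all_field.
From mathcomp Require Import reals.
From mathcomp Require Import zify ring lra.
Set Implicit Arguments. Unset Strict Implicit. Unset Printing Implicit Defensive.
Import Order.TTheory GRing.Theory Num.Theory.
Local Open Scope ring_scope.
Section Part1.
Variables (R : realType) (n : nat).

Definition z0 : Z2n n := [ffun=> false].

Lemma oscaleE (c : R) (a : Oalg R n) y : oscale c a y = c * a y.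
Proof. by rewrite ffunE. Qed.

Lemma ubasisE (x y : Z2n n) : ubasis R x y = (y == x)%:R.
Proof. by rewrite ffunE. Qed.

Lemma oscale1 (a : Oalg R n) : oscale 1 a = a.
Proof. by apply/ffunP => y; rewrite ffunE mul1r. Qed.

Lemma oscaleA (c d : R) (a : Oalg R n) : oscale c (oscale d a) = oscale (c * d) a.
Proof. by apply/ffunP => y; rewrite !ffunE mulrA. Qed.

Lemma addZ2nn (x : Z2n n) : addZ2n x x = z0.
Proof. by apply/ffunP => i; rewrite !ffunE addbb. Qed.

Lemma fexp00 p : fexp p z0 z0 = 0%N.
Proof.
rewrite /fexp !big1 // => *; rewrite ?big1 // => *; rewrite ?big1 // => *;
  by rewrite !ffunE ?muln0.
Qed.

Lemma Omul_basis p (a b : R) (x y : Z2n n) :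
  Omul p (oscale a (ubasis R x)) (oscale b (ubasis R y)) =
  oscale (a * b * (-1) ^+ fexp p x y) (ubasis R (addZ2n x y)).
Proof.
apply/ffunP => z; rewrite !ffunE.
rewrite (bigD1 x) //= [X in _ + X]big1 ?addr0; last first.
  move=> x' hx'; apply: big1 => y' _; rewrite !ffunE (negbTE hx') mulr0 mulr0 mul0r.
  by case: ifP.
rewrite (bigD1 y) //= [X in _ + X]big1 ?addr0; last first.
  move=> y' hy'; rewrite !ffunE (negbTE hy') mulr0 mulr0; by case: ifP.
rewrite !ffunE !eqxx !mulr1 eq_sym.
case: eqP => _; rewrite ?mulr1 ?mulr0 //; ring.
Qed.

Lemma ubasis_neq0 (x : Z2n n) : ubasis R x != 0.
Proof. apply/eqP => /ffunP /(_ x); rewrite !ffunE eqxx => /eqP; by rewrite oner_eq0. Qed.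

Lemma iso_parity p p' (phi : Oalg R n -> Oalg R n) : graded_iso p p' phi ->
  exists sigma : Z2n n -> Z2n n, injective sigma /\
    forall x, odd (fexp p x x) = odd (fexp p' (sigma x) (sigma x)).
Proof.
case=> hadd hsc [psi phiK psiK] hmul hhom.
have phi_inj : injective phi := can_inj phiK.
have phi0 : phi 0 = 0.
  apply: (@addrI _ (phi 0)); by rewrite addr0 -hadd addr0.
have hx : forall x, exists c y, c != 0 /\ phi (ubasis R x) = oscale c (ubasis R y).
  move=> x; have [|c [y hy]] := hhom (ubasis R x).
    by exists 1, x; rewrite oscale1.
  exists c, y; split => //; apply/eqP => c0; move: hy; rewrite c0.
  have -> : oscale 0 (ubasis R y) = 0 by apply/ffunP => z; rewrite !ffunE mul0r.
  by rewrite -phi0 => /phi_inj /eqP; rewrite (negbTE (ubasis_neq0 x)).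
pose sigma x := odflt x [pick y | phi (ubasis R x) y != 0].
have hsig : forall x, exists2 c, c != 0 & phi (ubasis R x) = oscale c (ubasis R (sigma x)).
  move=> x; have [c [y [c0 hy]]] := hx x; exists c => //.
  rewrite /sigma; case: pickP => [y' |]; rewrite hy.
    by rewrite !ffunE mulf_eq0 (negbTE c0) /= pnatr_eq0 eqb0 negbK => /eqP ->.
  by move/(_ y); rewrite !ffunE eqxx mulr1 (negbTE c0).
have h0 : phi (ubasis R z0) = ubasis R z0.
  have [d d0 hd] := hsig z0.
  have e : ubasis R z0 = Omul p (oscale 1 (ubasis R z0)) (oscale 1 (ubasis R z0)).
    by rewrite Omul_basis fexp00 addZ2nn !mul1r expr0 oscale1.
  have := congr1 phi e; rewrite !oscale1 hmul hd Omul_basis addZ2nn.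
  move=> /ffunP e2; have := e2 (sigma z0); rewrite !ffunE eqxx mulr1.
  case: eqP => [hs|_]; last by rewrite mulr0 => /eqP; rewrite (negbTE d0).
  rewrite hs fexp00 expr0 mulr1 mulr1 => h.
  have d1 : d = 1 by apply: (mulfI d0); rewrite mulr1 -h.
  by rewrite d1 oscale1.
exists sigma; split.
  move=> x1 x2 e.
  have [c1 c10 h1] := hsig x1; have [c2 c20 h2] := hsig x2.
  have : phi (oscale c2 (ubasis R x1)) = phi (oscale c1 (ubasis R x2)).
    by rewrite !hsc h1 h2 e !oscaleA mulrC.
  move=> /phi_inj /ffunP /(_ x1); rewrite !ffunE eqxx mulr1.
  by case: eqP => // _; rewrite mulr0 => /eqP; rewrite (negbTE c20).
move=> x; have [c c0 hc] := hsig x.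
have e : Omul p (oscale 1 (ubasis R x)) (oscale 1 (ubasis R x))
         = oscale ((-1) ^+ fexp p x x) (ubasis R z0).
  by rewrite Omul_basis addZ2nn !mul1r.
have := congr1 phi e; rewrite !oscale1 hmul hsc h0 hc Omul_basis addZ2nn.
move=> /ffunP /(_ z0); rewrite !ffunE eqxx !mulr1.
rewrite -signr_odd -[in X in _ = X -> _]signr_odd.
case: (odd (fexp p x x)); case: (odd (fexp p' _ _)) => //= h.
  by exfalso; move: h; rewrite expr1 expr0 mulr1; nra.
by exfalso; move: h; rewrite expr1 expr0 mulrN1; nra.
Qed.

End Part1.
Open Scope nat_scope.
Lemma sum_lt (h : nat -> nat) c m :
  \sum_(i < m) (i < c) * h i = \sum_(i < minn c m) h i.
Proof.
elim: m => [|m IH]; first by rewrite minn0 !big_ord0.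
rewrite big_ord_recr /= IH.
case: (ltnP m c) => hmc.
  have -> : minn c m.+1 = m.+1 by lia.
  by rewrite big_ord_recr /= mul1n.
have -> : minn c m.+1 = c by lia.
by rewrite mul0n addn0.
Qed.
Section Comb.
Variable g : nat -> bool.
Definition G1 m := \sum_(i < m) g i.

Lemma G1S m : G1 m.+1 = G1 m + g m.
Proof. by rewrite /G1 big_ord_recr. Qed.

Lemma C2_lemma m : \sum_(j < m) G1 j.+1 * g j = 'C((G1 m).+1, 2).
Proof.
elim: m => [|m IH]; first by rewrite big_ord0 /G1 big_ord0.
rewrite big_ord_recr /= IH !G1S; case: (g m) => /=.
  by rewrite muln1 !addn1 [in RHS]binS bin1.
by rewrite muln0 !addn0.
Qed.

Lemma C2b_lemma m : \sum_(j < m) g j * G1 j = 'C(G1 m, 2).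
Proof.
elim: m => [|m IH]; first by rewrite big_ord0 /G1 big_ord0.
rewrite big_ord_recr /= IH G1S; case: (g m) => /=.
  by rewrite mul1n addn1 [in RHS]binS bin1 addnC.
by rewrite mul0n !addn0.
Qed.

Lemma C3_lemma m : \sum_(k < m) g k * \sum_(j < k) g j * G1 j = 'C(G1 m, 3).
Proof.
elim: m => [|m IH]; first by rewrite big_ord0 /G1 big_ord0.
rewrite big_ord_recr /= IH G1S C2b_lemma; case: (g m) => /=.
  by rewrite mul1n addn1 [in RHS]binS addnC.
by rewrite mul0n !addn0.
Qed.
End Comb.
Lemma t (a b : nat) : a * (b + 1) = a + b * a. Proof. ring. Qed.
Section Fexp.
Variables (n : nat) (x : Z2n n).
Definition gx : nat -> bool := fun i => if insub i is Some j then x j else false.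
Lemma gxE (i : 'I_n) : gx i = x i.
Proof. by rewrite /gx valK. Qed.
Definition wt := \sum_(i < n) x i.
Definition aw p := \sum_(i < n | i < p) x i.
Lemma wtE : wt = G1 gx n.
Proof. by apply: eq_bigr => i _; rewrite gxE. Qed.

Lemma L2 : \sum_(i < n) \sum_(j < n) (i <= j) * x i * x j = 'C(wt.+1, 2).
Proof.
rewrite exchange_big /= wtE -C2_lemma.
apply: eq_bigr => j _.
rewrite -big_distrl /= -gxE.
rewrite (eq_bigr (fun i : 'I_n => (i < j.+1) * gx i)); last first.
  by move=> i _; rewrite gxE ltnS.
rewrite (sum_lt (fun i => nat_of_bool (gx i))); congr (G1 _ _ * _).
by have := ltn_ord j; lia.
Qed.

Lemma L3 : \sum_(i < n) \sum_(j < n) \sum_(k < n)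
     ((i < j) && (j < k)) * (x i * x j * x k + x i * x j * x k + x i * x j * x k)
   = 3 * 'C(wt, 3).
Proof.
under eq_bigr => i _ do rewrite exchange_big.
rewrite exchange_big /=.
under eq_bigr => k _ do rewrite exchange_big.
rewrite /= wtE -C3_lemma big_distrr /=.
apply: eq_bigr => k _.
transitivity (\sum_(j < n) (j < k) * (3 * gx k * (gx j * G1 gx j))).
  apply: eq_bigr => j _.
  transitivity (\sum_(i < n) (3 * gx k * gx j * (j < k)) * ((i < j) * gx i)).
    apply: eq_bigr => i _; rewrite !gxE.
    by case: (x i); case: (x j); case: (x k); case: (i < j); case: (j < k).
  rewrite -big_distrr /= (sum_lt (fun i => nat_of_bool (gx i))).
  have -> : minn j n = j by have := ltn_ord j; lia.
  rewrite /G1; ring.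
rewrite (sum_lt (fun j => 3 * gx k * (gx j * G1 gx j))).
have -> : minn k n = k by have := ltn_ord k; lia.
by rewrite -big_distrr /= mulnA.
Qed.

Lemma fexp_diag p : fexp p x x = 3 * 'C(wt, 3) + 'C(wt.+1, 2) + aw p.
Proof.
rewrite /fexp L3 L2; congr (_ + _).
by apply: eq_bigr => i _; case: (x i).
Qed.
End Fexp.
Close Scope nat_scope.

Definition rho (W : nat) : algC := (-1) ^+ (3 * 'C(W, 3) + 'C(W.+1, 2))%N.

Lemma rho4 W : rho (W + 4)%N = rho W.
Proof.
rewrite /rho -signr_odd -[in RHS]signr_odd addn4.
have e : (3 * 'C(W.+4, 3) + 'C((W.+4).+1, 2) =
          3 * 'C(W, 3) + 'C(W.+1, 2) + 2 * (6 * 'C(W, 2) + 11 * W + 11))%N.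
  rewrite !binS !bin1 !bin0; lia.
rewrite e; congr ((-1) ^+ _); lia.
Qed.

Lemma rho_mod W : rho W = rho (W %% 4).
Proof.
rewrite {1}(divn_eq W 4); elim: (W %/ 4)%N => [|q IH]; first by rewrite mul0n add0n.
have -> : (q.+1 * 4 + W %% 4 = (q * 4 + W %% 4) + 4)%N by lia.
by rewrite rho4.
Qed.

Lemma exp_mod4 (z : algC) W : z ^+ 4 = 1 -> z ^+ W = z ^+ (W %% 4).
Proof.
move=> h4; rewrite {1}(divn_eq W 4) exprD mulnC exprM h4 expr1n mul1r //.
Qed.

Lemma i4 : ('i : algC) ^+ 4 = 1.
Proof. by rewrite (exprM _ 2 2) sqrCi sqrrN expr1n. Qed.

Lemma rhoE W : 2 * rho W = 1 + (-1) ^+ W + 'i ^+ W + (- 'i) ^+ W - 2.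
Proof.
have m1 : ((-1 : algC) ^+ 4 = 1) by rewrite (exprM _ 2 2) sqrrN expr1n expr1n.
have mi : ((- 'i : algC) ^+ 4 = 1) by rewrite exprNn m1 mul1r i4.
rewrite rho_mod (exp_mod4 W i4) (exp_mod4 W m1) (exp_mod4 W mi).
have : (W %% 4 < 4)%N by rewrite ltn_mod.
move: (W %% 4)%N => r.
case: r => [|[|[|[|r]]]] hr; rewrite /rho.
- rewrite (_ : (3 * 'C(0, 3) + 'C(1, 2) = 0)%N); last by [].
  ring.
- rewrite (_ : (3 * 'C(1, 3) + 'C(2, 2) = 1)%N); last by [].
  ring.
- rewrite (_ : (3 * 'C(2, 3) + 'C(3, 2) = 3)%N); last by [].
  rewrite [(- 'i) ^+ 2]sqrrN sqrCi; ring.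
- rewrite (_ : (3 * 'C(3, 3) + 'C(4, 2) = 9)%N); last by [].
  ring.
- by move: hr.
Qed.

Definition Pz (n p : nat) (z : algC) :=
  \sum_(x : Z2n n) (-1) ^+ (aw x p) * z ^+ (wt x).

Lemma Pprod n p z :
  Pz n p z = \prod_(i < n) (1 + (if (i < p)%N then -1 else 1) * z).
Proof.
rewrite /Pz; symmetry.
transitivity (\prod_(i < n) \sum_(b : bool) ((if (i < p)%N then -1 else 1) * z) ^+ b).
  by apply: eq_bigr => i _; rewrite big_bool /= expr1 expr0 addrC.
rewrite bigA_distr_bigA /=; apply: eq_bigr => x _.
rewrite (eq_bigr (fun i : 'I_n => (if (i < p)%N then -1 else 1) ^+ x i * z ^+ x i)); last first.
  by move=> i _; rewrite exprMn.
rewrite big_split /= prodrXr; congr (_ * _).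
rewrite /aw -prodrXr [in RHS]big_mkcond /=; apply: eq_bigr => i _.
by case: ifP => _; rewrite ?expr1n.
Qed.

Lemma Pconst n p z : (p <= n)%N -> Pz n p z = (1 - z) ^+ p * (1 + z) ^+ (n - p).
Proof.
move=> hpn; rewrite Pprod.
rewrite -(big_mkord xpredT (fun i => 1 + (if (i < p)%N then -1 else 1) * z)).
rewrite (big_cat_nat (leq0n p) hpn) /=.
rewrite (eq_big_nat _ _ (F2 := fun=> 1 - z)); last first.
  by move=> i /andP [_ ->]; rewrite mulN1r.
rewrite [X in _ * X](eq_big_nat _ _ (F2 := fun=> 1 + z)); last first.
  by move=> i /andP [hi _]; rewrite ltnNge hi /= mul1r.
by rewrite !prodr_const_nat subn0.
Qed.

Definition S (n p : nat) : algC := \sum_(x : Z2n n) (-1) ^+ fexp p x x.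

Lemma S2 n p : 2 * S n p = Pz n p (-1) - Pz n p 1 + Pz n p 'i + Pz n p (- 'i).
Proof.
rewrite /S /Pz mulr_sumr -sumrB -!big_split /=; apply: eq_bigr => x _.
have h := rhoE (wt x); rewrite /rho in h.
rewrite fexp_diag exprD mulrA h expr1n; ring.
Qed.
Definition Ev (r k : nat) : algC := 'i ^+ k * (1 - 'i) ^+ r + (- 'i) ^+ k * (1 + 'i) ^+ r.
Definition T (r k : nat) : int :=
  match r, k with
  | 0%N, 0%N => 2
  | 0%N, 1%N => 0
  | 0%N, 2%N => - 2
  | 0%N, 3%N => 0
  | 1%N, 0%N => 2
  | 1%N, 1%N => 2
  | 1%N, 2%N => - 2
  | 1%N, 3%N => - 2
  | 2%N, 0%N => 0
  | 2%N, 1%N => 4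
  | 2%N, 2%N => 0
  | 2%N, 3%N => - 4
  | 3%N, 0%N => - 4
  | 3%N, 1%N => 4
  | 3%N, 2%N => 4
  | 3%N, 3%N => - 4
  | _, _ => 0 end.
Lemma EvT r k : (r < 4)%N -> (k < 4)%N -> Ev r k = (T r k)%:~R.
Proof.
case: r => [|[|[|[|r]]]] hr; last by move: hr.
all: case: k => [|[|[|[|k]]]] hk; last by move: hk.
- apply/eqP; rewrite -subr_eq0 (_ : _ - _ = ('i ^+ 2 + 1) * (0)).
    by rewrite sqrCi addNr mul0r eqxx.
  rewrite /Ev /T; ring.
- apply/eqP; rewrite -subr_eq0 (_ : _ - _ = ('i ^+ 2 + 1) * (0)).
    by rewrite sqrCi addNr mul0r eqxx.
  rewrite /Ev /T; ring.
- apply/eqP; rewrite -subr_eq0 (_ : _ - _ = ('i ^+ 2 + 1) * ((2) * 'i ^+ 0)).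
    by rewrite sqrCi addNr mul0r eqxx.
  rewrite /Ev /T; ring.
- apply/eqP; rewrite -subr_eq0 (_ : _ - _ = ('i ^+ 2 + 1) * (0)).
    by rewrite sqrCi addNr mul0r eqxx.
  rewrite /Ev /T; ring.
- apply/eqP; rewrite -subr_eq0 (_ : _ - _ = ('i ^+ 2 + 1) * (0)).
    by rewrite sqrCi addNr mul0r eqxx.
  rewrite /Ev /T; ring.
- apply/eqP; rewrite -subr_eq0 (_ : _ - _ = ('i ^+ 2 + 1) * ((-2) * 'i ^+ 0)).
    by rewrite sqrCi addNr mul0r eqxx.
  rewrite /Ev /T; ring.
- apply/eqP; rewrite -subr_eq0 (_ : _ - _ = ('i ^+ 2 + 1) * ((2) * 'i ^+ 0)).
    by rewrite sqrCi addNr mul0r eqxx.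
  rewrite /Ev /T; ring.
- apply/eqP; rewrite -subr_eq0 (_ : _ - _ = ('i ^+ 2 + 1) * ((2) * 'i ^+ 0 + (-2) * 'i ^+ 2)).
    by rewrite sqrCi addNr mul0r eqxx.
  rewrite /Ev /T; ring.
- apply/eqP; rewrite -subr_eq0 (_ : _ - _ = ('i ^+ 2 + 1) * ((2) * 'i ^+ 0)).
    by rewrite sqrCi addNr mul0r eqxx.
  rewrite /Ev /T; ring.
- apply/eqP; rewrite -subr_eq0 (_ : _ - _ = ('i ^+ 2 + 1) * ((-4) * 'i ^+ 0)).
    by rewrite sqrCi addNr mul0r eqxx.
  rewrite /Ev /T; ring.
- apply/eqP; rewrite -subr_eq0 (_ : _ - _ = ('i ^+ 2 + 1) * ((2) * 'i ^+ 2)).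
    by rewrite sqrCi addNr mul0r eqxx.
  rewrite /Ev /T; ring.
- apply/eqP; rewrite -subr_eq0 (_ : _ - _ = ('i ^+ 2 + 1) * ((4) * 'i ^+ 0 + (-4) * 'i ^+ 2)).
    by rewrite sqrCi addNr mul0r eqxx.
  rewrite /Ev /T; ring.
- apply/eqP; rewrite -subr_eq0 (_ : _ - _ = ('i ^+ 2 + 1) * ((6) * 'i ^+ 0)).
    by rewrite sqrCi addNr mul0r eqxx.
  rewrite /Ev /T; ring.
- apply/eqP; rewrite -subr_eq0 (_ : _ - _ = ('i ^+ 2 + 1) * ((-4) * 'i ^+ 0 + (-2) * 'i ^+ 2)).
    by rewrite sqrCi addNr mul0r eqxx.
  rewrite /Ev /T; ring.
- apply/eqP; rewrite -subr_eq0 (_ : _ - _ = ('i ^+ 2 + 1) * ((-4) * 'i ^+ 0 + (6) * 'i ^+ 2)).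
    by rewrite sqrCi addNr mul0r eqxx.
  rewrite /Ev /T; ring.
- apply/eqP; rewrite -subr_eq0 (_ : _ - _ = ('i ^+ 2 + 1) * ((4) * 'i ^+ 0 + (-4) * 'i ^+ 2 + (-2) * 'i ^+ 4)).
    by rewrite sqrCi addNr mul0r eqxx.
  rewrite /Ev /T; ring.
Qed.

Lemma u_iv : (1 + 'i : algC) = 'i * (1 - 'i).
Proof. rewrite mulrBr mulr1 -expr2 sqrCi; ring. Qed.
Lemma v_iu : (1 - 'i : algC) = (- 'i) * (1 + 'i).
Proof. rewrite mulrDr mulr1 mulNr -expr2 sqrCi; ring. Qed.
Lemma v4 : (1 - 'i : algC) ^+ 4 = -4.
Proof.
have v2 : (1 - 'i : algC) ^+ 2 = -2 * 'i.
  have -> : (1 - 'i : algC) ^+ 2 = 1 - 2 * 'i + 'i ^+ 2 by ring.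
  rewrite sqrCi; ring.
rewrite (exprM _ 2 2) v2 exprMn sqrCi; ring.
Qed.
Lemma u4 : (1 + 'i : algC) ^+ 4 = -4.
Proof.
have u2 : (1 + 'i : algC) ^+ 2 = 2 * 'i.
  have -> : (1 + 'i : algC) ^+ 2 = 1 + 2 * 'i + 'i ^+ 2 by ring.
  rewrite sqrCi; ring.
rewrite (exprM _ 2 2) u2 exprMn sqrCi; ring.
Qed.

Lemma exp_divmod (z : algC) n : z ^+ n = (z ^+ 4) ^+ (n %/ 4) * z ^+ (n %% 4).
Proof. by rewrite {1}(divn_eq n 4) exprD mulnC exprM. Qed.

Definition Sint (n p : nat) : int :=
  2 ^+ p * 0 ^+ (n - p) - 0 ^+ p * 2 ^+ (n - p)
  + (-4) ^+ (n %/ 4) * T (n %% 4) ((n - p) %% 4).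

Lemma Sval n p : (p <= n)%N -> 2 * S n p = (Sint n p)%:~R.
Proof.
move=> hpn; rewrite S2 !Pconst //.
set j := (n - p)%N.
have hn : n = (p + j)%N by rewrite /j subnKC.
have e1 : (1 - 'i : algC) ^+ p * (1 + 'i) ^+ j = 'i ^+ j * (1 - 'i) ^+ n.
  by rewrite u_iv exprMn mulrCA -exprD -hn.
have e2 : (1 - - 'i : algC) ^+ p * (1 + - 'i) ^+ j = (- 'i) ^+ j * (1 + 'i) ^+ n.
  by rewrite opprK -/(1 - 'i) v_iu exprMn mulrCA -exprD -hn.
rewrite e1 e2.
have mi : ((- 'i : algC) ^+ 4 = 1) by rewrite exprNn i4 mulr1 (exprM _ 2 2) sqrrN expr1n expr1n.
rewrite (exp_mod4 j i4) (exp_mod4 j mi) (exp_divmod (1 - 'i) n) (exp_divmod (1 + 'i) n) v4 u4.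
have := EvT (ltn_mod n 4) (ltn_mod j 4); rewrite /Ev => h.
rewrite /Sint.
have gen : forall A X Y Z W s0 : algC, A + X * (s0 * Y) + Z * (s0 * W) = A + s0 * (X * Y + Z * W).
  by move=> *; ring.
rewrite gen h.
rewrite rmorphD rmorphB /= !rmorphM /= !rmorphXn /= rmorphN /=.
rewrite -/j.
have c2 : ((2 : int)%:~R : algC) = 1 - - 1 by ring.
have c2' : (1 + 1 : algC) = 1 - - 1 by ring.
have c0 : ((0 : int)%:~R : algC) = 1 - 1 by ring.
have c4 : ((4 : int)%:~R : algC) = 4 by ring.
by rewrite c2 c2' c0 c4.
Qed.

Lemma S_inv (R : realType) n p p' : graded_isomorphic R n p p' -> S n p = S n p'.
Proof.
case=> phi /iso_parity [sigma [sinj hpar]].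
rewrite /S [in RHS](reindex_inj sinj) /=; apply: eq_bigr => x _.
by rewrite -signr_odd hpar signr_odd.
Qed.

Lemma Sint_inv (R : realType) n p p' : (p <= n)%N -> (p' <= n)%N ->
  graded_isomorphic R n p p' -> Sint n p = Sint n p'.
Proof.
move=> hp hp' h; apply: (@intr_inj algC).
by rewrite -!Sval // (S_inv h).
Qed.

Lemma noniso_Sint (R : realType) n p p' : (p <= n)%N -> (p' <= n)%N ->
  Sint n p != Sint n p' ->
  ~ graded_isomorphic R n p p' /\ ~ graded_isomorphic R n p' p.
Proof.
move=> hp hp' /eqP hne; split => h; apply: hne.
  exact: (Sint_inv hp hp' h).
by symmetry; exact: (Sint_inv hp' hp h).
Qed.

Lemma SintE_mid n p : (0 < p)%N -> (p < n)%N ->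
  Sint n p = (-4) ^+ (n %/ 4) * T (n %% 4) ((n - p) %% 4).
Proof.
move=> h0 h1; rewrite /Sint (expr0n _ (n - p)) (expr0n _ p).
have -> : (n - p == 0)%N = false by apply/eqP; lia.
have -> : (p == 0)%N = false by apply/eqP; lia.
by rewrite mulr0 mul0r subr0 add0r.
Qed.

Lemma SintE_n n : (0 < n)%N ->
  Sint n n = 2 ^+ n + (-4) ^+ (n %/ 4) * T (n %% 4) 0.
Proof.
move=> h0; rewrite /Sint subnn expr0 mulr1 (expr0n _ n).
have -> : (n == 0)%N = false by apply/eqP; lia.
by rewrite mul0r subr0 mod0n.
Qed.

Lemma SintE_0 n : (0 < n)%N ->
  Sint n 0 = - 2 ^+ n + (-4) ^+ (n %/ 4) * T (n %% 4) (n %% 4).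
Proof.
move=> h0; rewrite /Sint subn0 expr0 mul1r (expr0n _ n).
have -> : (n == 0)%N = false by apply/eqP; lia.
by rewrite expr0 mul1r mulr0n sub0r.
Qed.

Lemma Tbound r k k' : (r < 4)%N -> (k < 4)%N -> (k' < 4)%N ->
  `|T r k - T r k'| <= (if (r < 2)%N then 4 else 8).
Proof.
case: r => [|[|[|[|r]]]] hr; last by move: hr.
all: case: k => [|[|[|[|k]]]] hk; last by move: hk.
all: case: k' => [|[|[|[|k']]]] hk'; last by move: hk'.
all: rewrite /T /=; lia.
Qed.

Lemma key_bound n d : (5 <= n)%N ->
  `|d| <= (if (n %% 4 < 2)%N then 4 else 8) ->
  (2 : int) ^+ n != (-4) ^+ (n %/ 4) * d.
Proof.
move=> hn hd; apply/eqP => h.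
have := congr1 Num.norm h.
rewrite normrM !normrX normrN (ger0_norm (_ : (0 : int) <= 2)) //.
rewrite (ger0_norm (_ : (0 : int) <= 4)) //.
rewrite {1}(divn_eq n 4) exprD mulnC exprM.
rewrite (_ : (2 : int) ^+ 4 = 4 * 4) // exprMn.
set X := (4 : int) ^+ (n %/ 4); set D := `|d|.
have hs : (1 <= n %/ 4)%N by rewrite leq_divRL //; lia.
have hX : 4 <= X.
  rewrite /X -(subnKC hs) exprS ler_peMr // exprn_ege1 //.
move: hd; rewrite -/D.
have : (n %% 4 < 4)%N by rewrite ltn_mod.
have hr0 : (n %% 4 = 0)%N -> 16 <= X.
  move=> hr; have hs2 : (2 <= n %/ 4)%N by rewrite leq_divRL //; have := divn_eq n 4; lia.
  rewrite /X -(subnKC hs2) exprD ler_peMr // exprn_ege1 //.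
clearbody X D; move: hr0; case: (n %% 4)%N => [|[|[|[|r]]]] hr0 hr hd e //.
- have := hr0 erefl => h16; rewrite expr0 mulr1 in e; simpl in hd; nia.
- rewrite expr1 in e; simpl in hd; nia.
- rewrite (_ : (2 : int) ^+ 2 = 4) // in e; simpl in hd; nia.
- rewrite (_ : (2 : int) ^+ 3 = 8) // in e; simpl in hd; nia.
Qed.

Lemma neq_n n p : (5 <= n)%N -> (0 < p)%N -> (p < n)%N -> Sint n n != Sint n p.
Proof.
move=> hn h0 h1; rewrite SintE_n ?SintE_mid //; last by lia.
apply/eqP => h.
have := key_bound (d := T (n %% 4) ((n - p) %% 4) - T (n %% 4) 0) hn
   (Tbound (ltn_mod _ _) (ltn_mod _ _) (isT : (0 < 4)%N)).
by rewrite mulrBr -h addrK eqxx.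
Qed.

Lemma neq_0 n p : (5 <= n)%N -> (0 < p)%N -> (p < n)%N -> Sint n 0 != Sint n p.
Proof.
move=> hn h0 h1; rewrite SintE_0 ?SintE_mid //; last by lia.
apply/eqP => h.
have := key_bound (d := T (n %% 4) (n %% 4) - T (n %% 4) ((n - p) %% 4)) hn
   (Tbound (ltn_mod _ _) (ltn_mod _ _) (ltn_mod _ _)).
rewrite mulrBr -h => /negP; apply; apply/eqP; ring.
Qed.

Lemma neq_mid n j1 j2 : (5 <= n)%N -> (0 < j1)%N -> (j1 < n)%N ->
  (0 < j2)%N -> (j2 < n)%N ->
  T (n %% 4) (j1 %% 4) != T (n %% 4) (j2 %% 4) ->
  Sint n (n - j1) != Sint n (n - j2).
Proof.
move=> hn a1 b1 a2 b2 hT.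
rewrite !SintE_mid ?subKn //; try lia.
by rewrite (inj_eq (mulfI _)) // expf_neq0.
Qed.

Close Scope ring_scope.
Open Scope nat_scope.

Theorem mainTheorem12 (R : realType) (n : nat) (hn : (5 <= n)%N) :
  let noniso := fun p p' : nat =>
    ~ graded_isomorphic R n p p' /\ ~ graded_isomorphic R n p' p in
  (forall p : nat, (1 <= p)%N -> (p <= n - 1)%N -> noniso n p /\ noniso 0 p)
  /\ ((n %% 4 = 0)%N ->
        noniso (n - 1) (n - 2) /\ noniso (n - 1) (n - 4) /\ noniso (n - 2) (n - 4))
  /\ ((n %% 4 = 1)%N -> noniso (n - 1) (n - 2))
  /\ ((n %% 4 = 2)%N ->
        noniso (n - 1) (n - 2) /\ noniso (n - 1) (n - 3) /\ noniso (n - 2) (n - 3))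
  /\ ((n %% 4 = 3)%N -> noniso (n - 1) (n - 3)).
Proof.
move=> noniso.
have nm : forall j1 j2, (0 < j1)%N -> (j1 < n)%N -> (0 < j2)%N -> (j2 < n)%N ->
   T (n %% 4) (j1 %% 4) != T (n %% 4) (j2 %% 4) -> noniso (n - j1) (n - j2).
  move=> j1 j2 a1 b1 a2 b2 hT; apply: noniso_Sint; rewrite ?leq_subr //.
  exact: neq_mid.
split.
  move=> p h1 h2; split; apply: noniso_Sint => //; try lia.
    by apply: neq_n => //; lia.
  by apply: neq_0 => //; lia.
split.
  move=> hr; split; [|split]; apply: nm; rewrite ?hr //; lia.
split.
  move=> hr; apply: nm; rewrite ?hr //; lia.
split.
  move=> hr; split; [|split]; apply: nm; rewrite ?hr //; lia.
move=> hr; apply: nm; rewrite ?hr //; lia.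
Qed.
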